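(* Let $\mathcal{H}_1,\mathcal{H}_2$ be Hilbert spaces of finite dimensions $d_1,d_2$, let $\Lambda,\Xi\in\mathcal{O}(\mathcal{H}_1\to\mathcal{H}_2)$ be quantum channels and let $s>0$. Then $J_\Xi=\frac{J_\Lambda+s'J_\Theta}{1+s'}$ for some real $0<s'\le s$ and some channel $\Theta\in\mathcal{O}(\mathcal{H}_1\to\mathcal{H}_2)$ if and only if $S_m\!\left(\frac{1+s}{s}J_\Xi-\frac1sJ_\Lambda\right)\ge0$ for all $m=1,2,\dots,d_1d_2$.
   Context: $\mathcal{O}(\mathcal{H}_1\to\mathcal{H}_2)$ is the set of quantum channels from operators on $\mathcal{H}_1$ to operators on $\mathcal{H}_2$. The Choi operator of a linear map $\Lambda$ is $J_\Lambda=\sum_{i,j=1}^{d_1}|i\rangle\langle j|\otimes\Lambda(|i\rangle\langle j|)$. For a Hermitian operator $X$, define recursively $S_0(X)=1$ and $S_m(X)=\frac1m\sum_{l=1}^m(-1)^{l-1}\operatorname{tr}[X^l]\,S_{m-l}(X)$ for $m\ge1$. *)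

(* Defs.v *)
(* Complex numbers are modelled as R[i] for a real closed field R
   (mathcomp-real-closed's complex.v); R = the real numbers is a special case. *)
From HB Require Import structures.
From mathcomp Require Import all_boot all_order all_algebra.
From mathcomp Require Import complex mxtens.
Set Implicit Arguments. Unset Strict Implicit. Unset Printing Implicit Defensive.
Import Order.TTheory GRing.Theory Num.Theory.
Local Open Scope ring_scope.

Section QDefs.
Variable R : rcfType.
Local Notation C := R[i].

Definition adjmx m n (A : 'M[C]_(m, n)) : 'M[C]_(n, m) := (map_mx Num.conj A)^T.

Definition psdmx n (A : 'M[C]_n) : Prop :=
  adjmx A = A /\ forall v : 'cV[C]_n, 0 <= (adjmx v *m A *m v) 0 0.

(* the map id_k (x) L applied to a (k*d1)x(k*d1) matrix, by linear extension
   on the decomposition X = sum_{a,b} |a><b| (x) X_ab *)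
Definition ampl k d1 d2 (L : 'M[C]_d1 -> 'M[C]_d2) (X : 'M[C]_(k * d1))
  : 'M[C]_(k * d2) :=
  \sum_(a < k) \sum_(b < k)
    (delta_mx a b *t L (\matrix_(i, j) X (mxtens_index (a, i)) (mxtens_index (b, j)))).

Definition completely_positive d1 d2 (L : 'M[C]_d1 -> 'M[C]_d2) : Prop :=
  forall (k : nat) (X : 'M[C]_(k * d1)), psdmx X -> psdmx (ampl L X).

Definition trace_preserving d1 d2 (L : 'M[C]_d1 -> 'M[C]_d2) : Prop :=
  forall X : 'M[C]_d1, \tr (L X) = \tr X.

Definition channel d1 d2 (L : {linear 'M[C]_d1 -> 'M[C]_d2}) : Prop :=
  completely_positive L /\ trace_preserving L.

Definition choi d1 d2 (L : 'M[C]_d1 -> 'M[C]_d2) : 'M[C]_(d1 * d2) :=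
  \sum_(i < d1) \sum_(j < d1) (delta_mx i j *t L (delta_mx i j)).

(* matrix power (valid for any size n) *)
Definition mxpow n (X : 'M[C]_n) (l : nat) : 'M[C]_n := iter l (mulmx X) 1%:M.

Fixpoint Slist n (X : 'M[C]_n) (m : nat) : seq C :=
  match m with
  | 0 => [:: 1]
  | m'.+1 =>
      let s := Slist X m' in
      rcons s ((m'.+1)%:R^-1 *
        \sum_(l < m'.+1) ((-1) ^+ l * \tr (mxpow X l.+1) * nth 0 s (m' - l)))
  end.

Definition Spoly n (X : 'M[C]_n) (m : nat) : C := nth 0 (Slist X m) m.

End QDefs.

(* Main.v *)
Require Import Defs.
From HB Require Import structures.
From mathcomp Require Import all_boot all_order all_algebra.
From mathcomp Require Import complex mxtens spectral.
Set Implicit Arguments. Unset Strict Implicit. Unset Printing Implicit Defensive.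
Import Order.TTheory GRing.Theory Num.Theory Num.Def.
Local Open Scope ring_scope.
From mathcomp Require Import ring zify lra.
Section Sym.
Variable C : numClosedFieldType.

Definition eprev (e : nat -> C) (j : nat) : C := if j is j'.+1 then e j' else 0.

Fixpoint elsym (s : seq C) (m : nat) : C :=
  match s with
  | [::] => (m == 0)%:R
  | x :: s' => elsym s' m + x * eprev (elsym s') m
  end.

Definition psum (s : seq C) (l : nat) : C := \sum_(x <- s) x ^+ l.

Lemma elsym0 s : elsym s 0 = 1.
Proof. by elim: s => [|x s IH] //=; rewrite IH mulr0 addr0. Qed.

Lemma tele x s m :
  \sum_(l < m.+1) (-1) ^+ l * x ^+ l.+1 * elsym (x :: s) (m - l) = x * elsym s m.
Proof.
elim: m => [|m IH].
  by rewrite big_ord1 /= expr0 mul1r expr1 mulr0 addr0.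
rewrite big_ord_recl subn0 expr0 mul1r expr1.
have -> : \sum_(i < m.+1) (-1) ^+ bump 0 i * x ^+ (bump 0 i).+1 * elsym (x :: s) (m.+1 - bump 0 i)
   = - (x * (x * elsym s m)).
  rewrite -IH mulr_sumr -sumrN; apply: eq_bigr => i _.
  rewrite /bump /= add1n subSS !exprS; ring.
rewrite /=; ring.
Qed.

Lemma newtonA s m
  (IH : forall k, k.+1%:R * elsym s k.+1 =
          \sum_(l < k.+1) (-1) ^+ l * psum s l.+1 * elsym s (k - l)) :
  \sum_(l < m.+1) (-1) ^+ l * psum s l.+1 * eprev (elsym s) (m - l) = m%:R * elsym s m.
Proof.
case: m => [|k]; first by rewrite big_ord1 /= mulr0 mul0r.
rewrite big_ord_recr /= subnn mulr0 addr0 IH.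
apply: eq_bigr => i _; rewrite subSn //; exact: ltnSE (ltn_ord i).
Qed.

Lemma newton s m : m.+1%:R * elsym s m.+1 =
  \sum_(l < m.+1) (-1) ^+ l * psum s l.+1 * elsym s (m - l).
Proof.
elim: s m => [|x s IH] m.
  rewrite /= mulr0; symmetry; apply: big1 => i _.
  by rewrite /psum big_nil mulr0 mul0r.
transitivity (\sum_(l < m.+1) (-1) ^+ l * psum s l.+1 * elsym (x :: s) (m - l)
  + \sum_(l < m.+1) (-1) ^+ l * x ^+ l.+1 * elsym (x :: s) (m - l)); last first.
  rewrite -big_split /=; apply: eq_bigr => i _.
  rewrite /psum big_cons; ring.
rewrite tele /=.
under eq_bigr => i _ do rewrite mulrDr.
rewrite big_split /= -IH.
have -> : \sum_(i < m.+1) (-1) ^+ i * psum s i.+1 * (x * eprev (elsym s) (m - i))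
   = x * \sum_(i < m.+1) (-1) ^+ i * psum s i.+1 * eprev (elsym s) (m - i).
  rewrite mulr_sumr; apply: eq_bigr => i _; ring.
rewrite newtonA // -natr1; ring.
Qed.

Lemma elsym_ge0 s : all (fun x => 0 <= x) s -> forall m, 0 <= elsym s m.
Proof.
elim: s => [|x s IH] /= => [_ m|/andP[x0 /IH H] m]; first by rewrite ler0n.
rewrite addr_ge0 // mulr_ge0 //; case: m => //= m.
Qed.

Lemma elsym_big s m : (size s < m)%N -> elsym s m = 0.
Proof.
elim: s m => [|x s IH] [|m] //= Hm.
rewrite /= (IH m.+1) ?(IH m) ?mulr0 ?addr0 //; exact: ltnW.
Qed.

Lemma elsym_coef s j : (\prod_(x <- s) (1 + x *: 'X))`_j = elsym s j.
Proof.
elim: s j => [|x s IH] j /=.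
  by rewrite big_nil coef1.
rewrite big_cons mulrDl mul1r coefD -scalerAl coefZ coefXM IH.
by case: j => [|j] /=; rewrite ?IH.
Qed.

Lemma elsym_roots s : (forall x, x \in s -> x \is Num.real) ->
  (forall m, (1 <= m <= size s)%N -> 0 <= elsym s m) ->
  forall x, x \in s -> 0 <= x.
Proof.
move=> Hr He x xs; have xr := Hr x xs.
case: (real_ge0P xr) => // xlt0; exfalso.
set t := - x^-1.
have tpos : 0 < t by rewrite /t oppr_gt0 invr_lt0.
set p := \prod_(y <- s) (1 + y *: 'X).
have p0 : p.[t] = 0.
  rewrite /p horner_prod; apply/eqP; rewrite prodf_seq_eq0; apply/hasP.
  exists x => //=; rewrite !hornerE /t mulrN mulfV ?subrr //.
  by rewrite ltr0_neq0.
have sz : (size p <= (size s).+1)%N.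
  apply/leq_sizeP => j Hj; rewrite elsym_coef elsym_big //.
have := horner_coef_wide t sz; rewrite p0 big_ord_recl elsym_coef elsym0 expr0 mulr1.
move/esym/eqP; rewrite gt_eqF //.
apply: ltr_pwDl => //; apply: sumr_ge0 => i _.
apply: mulr_ge0; last by rewrite exprn_ge0 // ltW.
by rewrite elsym_coef; apply: He; rewrite /= /bump /= add1n ltn_ord.
Qed.

End Sym.
Section S.
Variable R : rcfType.
Local Notation C := R[i].

Lemma size_Slist n (X : 'M[C]_n) m : size (Slist X m) = m.+1.
Proof. by elim: m => [|m IH] //=; rewrite size_rcons IH. Qed.

Lemma nth_Slist n (X : 'M[C]_n) m j : (j <= m)%N -> nth 0 (Slist X m) j = Spoly X j.
Proof.
elim: m => [|m IH]; first by rewrite leqn0 => /eqP ->.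
rewrite leq_eqVlt => /orP[/eqP -> //|Hj].
by rewrite /= nth_rcons size_Slist Hj IH.
Qed.

Lemma SpolyS n (X : 'M[C]_n) m : Spoly X m.+1 =
  m.+1%:R^-1 * \sum_(l < m.+1) ((-1)^+l * \tr (mxpow X l.+1) * Spoly X (m - l)).
Proof.
rewrite /Spoly /= nth_rcons size_Slist ltnn eqxx; congr (_ * _).
by apply: eq_bigr => i _; rewrite nth_Slist // leq_subr.
Qed.

Lemma Spoly_elsym n (X : 'M[C]_n) (s : seq C) :
  (forall l, \tr (mxpow X l.+1) = psum s l.+1) -> forall m, Spoly X m = elsym s m.
Proof.
move=> Htr m; elim/ltn_ind: m => [[|m]] IH.
  by rewrite /Spoly /= elsym0.
rewrite SpolyS.
have -> : \sum_(l < m.+1) ((-1)^+l * \tr (mxpow X l.+1) * Spoly X (m - l))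
  = \sum_(l < m.+1) (-1) ^+ l * psum s l.+1 * elsym s (m - l).
  apply: eq_bigr => i _; rewrite Htr IH //; lia.
by rewrite -newton mulKf // pnatr_eq0.
Qed.

Lemma adjmxE m n (A : 'M[C]_(m, n)) i j : adjmx A i j = conjC (A j i).
Proof. by rewrite /adjmx !mxE. Qed.

Lemma adjmxM m n p (A : 'M[C]_(m, n)) (B : 'M[C]_(n, p)) :
  adjmx (A *m B) = adjmx B *m adjmx A.
Proof. by rewrite /adjmx map_mxM trmx_mul. Qed.

Lemma adjmxK m n (A : 'M[C]_(m, n)) : adjmx (adjmx A) = A.
Proof. by apply/matrixP => i j; rewrite !adjmxE conjCK. Qed.

Lemma adjmxD m n (A B : 'M[C]_(m, n)) : adjmx (A + B) = adjmx A + adjmx B.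
Proof. by apply/matrixP => i j; rewrite !mxE rmorphD. Qed.

Lemma adjmxZ m n a (A : 'M[C]_(m, n)) : adjmx (a *: A) = conjC a *: adjmx A.
Proof. by apply/matrixP => i j; rewrite !mxE rmorphM. Qed.

Lemma adjmx_delta m n (i : 'I_m) (j : 'I_n) : adjmx (delta_mx i j : 'M[C]_(m,n)) = delta_mx j i.
Proof. by apply/matrixP => a b; rewrite !mxE rmorph_nat andbC. Qed.

Lemma herm_sym n (X : 'M[C]_n) : adjmx X = X -> X \is hermsymmx.
Proof.
move=> H; apply/is_hermitianmxP; rewrite expr0 scale1r.
by rewrite -[X in LHS]H /adjmx map_trmx.
Qed.

Lemma spec_decomp n (X : 'M[C]_n) : adjmx X = X ->
  [/\ X = adjmx (spectralmx X) *m diag_mx (spectral_diag X) *m spectralmx X,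
      spectralmx X *m adjmx (spectralmx X) = 1%:M,
      adjmx (spectralmx X) *m spectralmx X = 1%:M &
      forall k, spectral_diag X 0 k \is Num.real].
Proof.
move=> H; have hX := herm_sym H.
have U := spectral_unitarymx X.
have E : adjmx (spectralmx X) = invmx (spectralmx X).
  by rewrite invmx_unitary // /adjmx map_trmx.
have PP : spectralmx X *m adjmx (spectralmx X) = 1%:M.
  by rewrite E mulmxV // spectral_unit.
split => //.
- by rewrite E; apply/orthomx_spectralP; apply: hermitian_normalmx.
- exact: mulmx1C.
- by move=> k; have /mxOverP := hermitian_spectral_diag_real hX; apply.
Qed.

Section Diag.
Variables (n : nat) (X P : 'M[C]_n) (d : 'rV[C]_n).
Hypotheses (HX : X = adjmx P *m diag_mx d *m P) (HP1 : P *m adjmx P = 1%:M)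
  (HP2 : adjmx P *m P = 1%:M).

Lemma mxpow_spec l : mxpow X l = adjmx P *m diag_mx (\row_k (d 0 k ^+ l)) *m P.
Proof.
elim: l => [|l IH].
  have -> : (\row_k (d 0 k ^+ 0)) = const_mx 1 by apply/rowP => k; rewrite !mxE.
  by rewrite diag_const_mx mulmx1 HP2.
rewrite /mxpow /= -/(mxpow X l) IH HX !mulmxA -[_ *m P *m adjmx P]mulmxA HP1 mulmx1.
rewrite -[_ *m diag_mx d *m _]mulmxA mulmx_diag; congr (_ *m _ *m _).
by congr diag_mx; apply/rowP => k; rewrite !mxE exprS.
Qed.

Lemma tr_mxpow l : \tr (mxpow X l) = \sum_k d 0 k ^+ l.
Proof.
rewrite mxpow_spec mxtrace_mulC mulmxA HP1 mul1mx mxtrace_diag.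
by apply: eq_bigr => k _; rewrite mxE.
Qed.

Lemma quad_diag (w : 'cV[C]_n) :
  (adjmx w *m diag_mx d *m w) 0 0 = \sum_k d 0 k * (w k 0 * conjC (w k 0)).
Proof.
rewrite mul_mx_diag !mxE; apply: eq_bigr => k _; rewrite !mxE; ring.
Qed.

Lemma psd_diag : psdmx X <-> forall k, 0 <= d 0 k.
Proof.
split.
  move=> [_ H] k; have := H (adjmx P *m delta_mx k 0).
  rewrite adjmxM adjmxK adjmx_delta HX !mulmxA -[_ *m P *m adjmx P]mulmxA HP1 mulmx1.
  rewrite -(mulmxA _ P) HP1 mulmx1 -rowE -colE !mxE eqxx mulr1n.
  done.
move=> H; split.
  rewrite HX !adjmxM adjmxK mulmxA; congr (_ *m _ *m _).
  apply/matrixP => i j; rewrite !mxE eq_sym; case: eqP => [->|]; last by rewrite !mulr0n conjC0.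
  by rewrite !mulr1n conj_Creal // ger0_real.
move=> v; rewrite HX !mulmxA -(mulmxA _ _ P) -adjmxM.
rewrite -mulmxA -(mulmxA _ P v) mulmxA quad_diag; apply: sumr_ge0 => k _.
by apply: mulr_ge0 => //; apply: mul_conjC_ge0.
Qed.
End Diag.

Lemma S_psd n (X : 'M[C]_n) : adjmx X = X ->
  (psdmx X <-> forall m, (1 <= m <= n)%N -> 0 <= Spoly X m).
Proof.
move=> H; have [HX HP1 HP2 Hr] := spec_decomp H.
set d := spectral_diag X in HX Hr *.
set s := [seq d 0 k | k <- index_enum 'I_n].
have Hs : forall m, Spoly X m = elsym s m.
  apply: Spoly_elsym => l; rewrite (tr_mxpow HX HP1 HP2) /psum /s big_map //.
have sz : size s = n by rewrite size_map -(filter_predT (index_enum _)) deprecated_filter_index_enum -cardE card_ord.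
rewrite (psd_diag HX HP1); split.
  move=> Hd m _; rewrite Hs; apply: elsym_ge0; apply/allP => x /mapP [k _ ->].
  exact: Hd.
move=> HS k; apply: (@elsym_roots _ s).
- by move=> x /mapP [j _ ->].
- by move=> m; rewrite sz -Hs; apply: HS.
- by apply: map_f; rewrite mem_index_enum.
Qed.

Lemma sum_tens m n (F : 'I_(m * n) -> C) :
  \sum_(r < m * n) F r = \sum_(a < m) \sum_(p < n) F (mxtens_index (a, p)).
Proof.
rewrite pair_big /=; apply: reindex => /=.
exists (@mxtens_unindex m n) => i _; first by case: i => a b; rewrite mxtens_indexK.
by rewrite -surjective_pairing mxtens_unindexK.
Qed.

Lemma mx_tens_ext m n m' n' (A B : 'M[C]_(m * n, m' * n')) :
  (forall a p b q, A (mxtens_index (a, p)) (mxtens_index (b, q)) =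
                   B (mxtens_index (a, p)) (mxtens_index (b, q))) -> A = B.
Proof.
move=> H; apply/matrixP => r c.
by case: (mxtens_indexP r) => a p; case: (mxtens_indexP c) => b q; apply: H.
Qed.

Lemma sum_delta_tens k d (F : 'I_k -> 'I_k -> 'M[C]_d) a p b q :
  (\sum_(a' < k) \sum_(b' < k) (delta_mx a' b' *t F a' b'))
     (mxtens_index (a, p)) (mxtens_index (b, q)) = F a b p q.
Proof.
rewrite summxE (eq_bigr (fun a' => \sum_(b' < k) ((a' == a) && (b' == b))%:R * F a' b' p q)); last first.
  move=> a' _; rewrite summxE; apply: eq_bigr => b' _; rewrite tensmxE mxE. by rewrite eq_sym [b == _]eq_sym.
rewrite (bigD1 a) //= [X in _ + X]big1 => [|a' Ha']; last first.
  by apply: big1 => b' _; rewrite (negbTE Ha') mul0r.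
rewrite addr0 (bigD1 b) //= [X in _ + X]big1 => [|b' Hb']; last by rewrite (negbTE Hb') andbF mul0r.
by rewrite !eqxx mul1r !addr0.
Qed.

Definition blk k d (X : 'M[C]_(k * d)) (a b : 'I_k) : 'M[C]_d :=
  \matrix_(i, j) X (mxtens_index (a, i)) (mxtens_index (b, j)).

Lemma amplE k d1 d2 (L : 'M[C]_d1 -> 'M[C]_d2) (X : 'M[C]_(k * d1)) :
  ampl L X = \sum_(a < k) \sum_(b < k) (delta_mx a b *t L (blk X a b)).
Proof. by []. Qed.

Lemma choi_entry d1 d2 (L : 'M[C]_d1 -> 'M[C]_d2) a p b q :
  choi L (mxtens_index (a, p)) (mxtens_index (b, q)) = L (delta_mx a b) p q.
Proof. exact: sum_delta_tens. Qed.

Lemma ampl_entry k d1 d2 (L : 'M[C]_d1 -> 'M[C]_d2) (X : 'M[C]_(k * d1)) a p b q :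
  ampl L X (mxtens_index (a, p)) (mxtens_index (b, q)) = L (blk X a b) p q.
Proof. exact: sum_delta_tens. Qed.

Lemma quad_rank1 m (z : 'rV[C]_m) : 0 <= (z *m adjmx z) 0 0.
Proof.
rewrite mxE; apply: sumr_ge0 => j _; rewrite adjmxE mul_conjC_ge0 //.
Qed.

Lemma choi_psd d1 d2 (L : 'M[C]_d1 -> 'M[C]_d2) :
  completely_positive L -> psdmx (choi L).
Proof.
move=> HL.
pose w : 'cV[C]_(d1 * d1) :=
  \col_r ((@mxtens_unindex d1 d1 r).1 == (@mxtens_unindex d1 d1 r).2)%:R.
have -> : choi L = ampl L (w *m adjmx w).
  rewrite amplE /choi; apply: eq_bigr => a _; apply: eq_bigr => b _.
  congr (_ *t L _); apply/matrixP => i j.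
  rewrite !mxE big_ord1 adjmxE !mxE !mxtens_indexK /= rmorph_nat -natrM.
  by rewrite mulnb [i == a]eq_sym [j == b]eq_sym.
apply: HL; split; first by rewrite adjmxM adjmxK.
move=> v; rewrite mulmxA -mulmxA.
have -> : adjmx w *m v = adjmx (adjmx v *m w) by rewrite adjmxM adjmxK.
exact: quad_rank1.
Qed.

Lemma sum_kron n (a : 'I_n) (F : 'I_n -> C) : \sum_(a' < n) ((a == a')%:R * F a') = F a.
Proof.
rewrite (bigD1 a) //= eqxx mul1r big1 ?addr0 // => a' Ha'.
by rewrite eq_sym (negbTE Ha') mul0r.
Qed.

Lemma psd_comb n (A B : 'M[C]_n) a b : psdmx A -> psdmx B -> 0 <= a -> 0 <= b ->
  psdmx (a *: A + b *: B).
Proof.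
move=> [HA QA] [HB QB] a0 b0; split.
  by rewrite adjmxD !adjmxZ HA HB !conj_Creal // ger0_real.
move=> v; rewrite mulmxDr mulmxDl -!scalemxAr -!scalemxAl.
have E : forall A' B' : 'M[C]_1, (a *: A' + b *: B') 0 0 = a * A' 0 0 + b * B' 0 0.
  by move=> A' B'; rewrite !mxE.
rewrite E.
by rewrite addr_ge0 // mulr_ge0.
Qed.

Lemma psd0 n : psdmx (0 : 'M[C]_n).
Proof.
split; first by apply/matrixP => i j; rewrite !mxE conjC0.
by move=> v; rewrite mulmx0 mul0mx mxE.
Qed.

Lemma psd_sum n I (r : seq I) (c : I -> C) (F : I -> 'M[C]_n) :
  (forall i, 0 <= c i) -> (forall i, psdmx (F i)) ->
  psdmx (\sum_(i <- r) c i *: F i).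
Proof.
move=> Hc HF; elim: r => [|x r IH]; first by rewrite big_nil; apply: psd0.
rewrite big_cons -[X in _ + X]scale1r; apply: psd_comb => //.
Qed.

Lemma psd_congr m n (W : 'M[C]_(m, n)) (Y : 'M[C]_n) : psdmx Y ->
  psdmx (W *m Y *m adjmx W).
Proof.
move=> [HY QY]; split; first by rewrite !adjmxM adjmxK HY mulmxA.
move=> v; have := QY (adjmx W *m v).
by rewrite adjmxM adjmxK !mulmxA.
Qed.
End S.

Definition thetaf (R : rcfType) d1 d2 (X : 'M[R[i]]_(d1 * d2)) (M : 'M[R[i]]_d1)
  : 'M[R[i]]_d2 := \sum_(i < d1) \sum_(j < d1) M i j *: blk X i j.

Lemma thetaf_lin (R : rcfType) d1 d2 (X : 'M[R[i]]_(d1 * d2)) :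
  linear (thetaf X).
Proof.
move=> a M N; rewrite /thetaf scaler_sumr -big_split; apply: eq_bigr => i _.
rewrite scaler_sumr -big_split; apply: eq_bigr => j _.
by rewrite !mxE scalerDl scalerA.
Qed.

HB.instance Definition _ (R : rcfType) d1 d2 (X : 'M[R[i]]_(d1 * d2)) :=
  GRing.isLinear.Build R[i] 'M[R[i]]_d1 'M[R[i]]_d2 *:%R (thetaf X) (thetaf_lin X).

Definition thetaL (R : rcfType) d1 d2 (X : 'M[R[i]]_(d1 * d2))
  : {linear 'M[R[i]]_d1 -> 'M[R[i]]_d2} := thetaf X.

Section Theta.
Variable R : rcfType.
Local Notation C := R[i].

Lemma thetaf_delta d1 d2 (X : 'M[C]_(d1 * d2)) a b :
  thetaf X (delta_mx a b) = blk X a b.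
Proof.
apply/matrixP => p q; rewrite /thetaf summxE.
under eq_bigr => i _ do rewrite summxE.
rewrite (eq_bigr (fun i => (a == i)%:R * \sum_(j < d1) (b == j)%:R * blk X i j p q)).
  by rewrite sum_kron sum_kron.
move=> i _; rewrite mulr_sumr; apply: eq_bigr => j _.
by rewrite !mxE mulrA -natrM mulnb [i == a]eq_sym [j == b]eq_sym.
Qed.

Lemma choi_thetaf d1 d2 (X : 'M[C]_(d1 * d2)) : choi (thetaf X) = X.
Proof.
by apply: mx_tens_ext => a p b q; rewrite choi_entry thetaf_delta mxE.
Qed.

Lemma blk_choi d1 d2 (L : 'M[C]_d1 -> 'M[C]_d2) a b : blk (choi L) a b = L (delta_mx a b).
Proof. by apply/matrixP => p q; rewrite mxE choi_entry. Qed.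

Lemma tr_thetaf d1 d2 (X : 'M[C]_(d1 * d2)) :
  (forall i j, \tr (blk X i j) = (i == j)%:R) -> trace_preserving (thetaf X).
Proof.
move=> H M; rewrite /thetaf raddf_sum /=.
rewrite [in RHS]/mxtrace; apply: eq_bigr => i _.
rewrite raddf_sum /=; rewrite -[RHS](sum_kron i (fun j => M i j)).
apply: eq_bigr => j _; rewrite linearZ /= H mulrC //.
Qed.

Section Kraus.
Variables (d1 d2 : nat) (X P : 'M[C]_(d1 * d2)) (d : 'rV[C]_(d1 * d2)).
Hypothesis HX : X = adjmx P *m diag_mx d *m P.

Lemma spec_entry u w : X u w = \sum_k conjC (P k u) * (d 0 k * P k w).
Proof.
rewrite HX mxE; apply: eq_bigr => k _.
by rewrite mul_mx_diag mxE adjmxE mulrA.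
Qed.

Definition W kk (k : 'I_(d1 * d2)) : 'M[C]_(kk * d2, kk * d1) :=
  \matrix_(r, c) (((@mxtens_unindex kk d2 r).1 == (@mxtens_unindex kk d1 c).1)%:R *
     conjC (P k (mxtens_index ((@mxtens_unindex kk d1 c).2, (@mxtens_unindex kk d2 r).2)))).

Lemma WYW_entry kk (k : 'I_(d1 * d2)) (Y : 'M[C]_(kk * d1)) a p b q :
  (W kk k *m Y *m adjmx (W kk k)) (mxtens_index (a, p)) (mxtens_index (b, q)) =
  \sum_i \sum_j (conjC (P k (mxtens_index (i, p))) * Y (mxtens_index (a, i)) (mxtens_index (b, j))
                 * P k (mxtens_index (j, q))).
Proof.
rewrite mxE sum_tens.
rewrite (eq_bigr (fun b' => (b == b')%:R * \sum_(j < d1)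
     ((W kk k *m Y) (mxtens_index (a, p)) (mxtens_index (b', j)) * P k (mxtens_index (j, q))))); last first.
  move=> b' _; rewrite mulr_sumr; apply: eq_bigr => j _.
  rewrite adjmxE !mxE !mxtens_indexK /= rmorphM /= rmorph_nat conjCK; ring.
rewrite sum_kron exchange_big /=; apply: eq_bigr => j _.
rewrite mxE sum_tens mulr_suml.
rewrite (eq_bigr (fun a' => (a == a')%:R * \sum_(i < d1) (conjC (P k (mxtens_index (i, p)))
   * Y (mxtens_index (a', i)) (mxtens_index (b, j)) * P k (mxtens_index (j, q))))); last first.
  move=> a' _; rewrite mulr_suml mulr_sumr; apply: eq_bigr => i _.
  rewrite !mxE !mxtens_indexK /=; ring.
by rewrite sum_kron.
Qed.

Lemma ampl_kraus kk (Y : 'M[C]_(kk * d1)) :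
  ampl (thetaf X) Y = \sum_k d 0 k *: (W kk k *m Y *m adjmx (W kk k)).
Proof.
apply: mx_tens_ext => a p b q.
rewrite ampl_entry [RHS]summxE.
under [RHS]eq_bigr => k _ do rewrite mxE WYW_entry mulr_sumr.
rewrite /thetaf summxE exchange_big /=; apply: eq_bigr => i _.
rewrite summxE.
rewrite (eq_bigr (fun j => \sum_k (Y (mxtens_index (a, i)) (mxtens_index (b, j)) *
   (conjC (P k (mxtens_index (i, p))) * (d 0 k * P k (mxtens_index (j, q))))))); last first.
  by move=> j _; rewrite !mxE spec_entry mulr_sumr.
rewrite exchange_big /=; apply: eq_bigr => k _.
rewrite mulr_sumr; apply: eq_bigr => j _; ring.
Qed.

Lemma thetaf_cp : (forall k, 0 <= d 0 k) -> completely_positive (thetaf X).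
Proof.
move=> Hd kk Y HY; rewrite ampl_kraus; apply: psd_sum => // k.
exact: psd_congr.
Qed.
End Kraus.
End Theta.

Section Main.
Variable R : rcfType.
Local Notation C := R[i].

Lemma tr_delta n (i j : 'I_n) : \tr (delta_mx i j : 'M[C]_n) = (i == j)%:R.
Proof.
rewrite /mxtrace (bigD1 i) //= big1 => [|k Hk]; first by rewrite mxE eqxx addr0.
by rewrite mxE (negbTE Hk).
Qed.

Lemma adjmxN m n (A : 'M[C]_(m, n)) : adjmx (- A) = - adjmx A.
Proof. by apply/matrixP => i j; rewrite !mxE rmorphN. Qed.

End Main.

Theorem lemma14 (R : rcfType) (d1 d2 : nat)
    (Lam Xi : {linear 'M[R[i]]_d1 -> 'M[R[i]]_d2})
    (hLam : channel Lam) (hXi : channel Xi)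
    (s : R[i]) (hs : 0 < s) :
  (exists (s' : R[i]) (Theta : {linear 'M[R[i]]_d1 -> 'M[R[i]]_d2}),
      [/\ 0 < s', s' <= s, channel Theta &
          choi Xi = (1 + s')^-1 *: (choi Lam + s' *: choi Theta)])
  <->
  (forall m : nat, (1 <= m <= d1 * d2)%N ->
     0 <= Spoly ((1 + s) / s *: choi Xi - s^-1 *: choi Lam) m).
Proof.
have s0 : s != 0 by rewrite lt0r_neq0.
have s1p : 0 < 1 + s by rewrite addr_gt0.
have s1 : 1 + s != 0 by rewrite lt0r_neq0.
have JX := choi_psd hXi.1; have JL := choi_psd hLam.1.
set X := (1 + s) / s *: choi Xi - s^-1 *: choi Lam.
have HXh : adjmx X = X.
  rewrite /X adjmxD adjmxN !adjmxZ JX.1 JL.1 !conj_Creal //.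
    by rewrite ger0_real // invr_ge0 ltW.
  by rewrite ger0_real // divr_ge0 // ltW.
split.
  move=> [s' [Th [s'0 s's hTh E]]] m Hm.
  have s'1 : 1 + s' != 0 by rewrite lt0r_neq0 // addr_gt0.
  apply: (S_psd HXh).1 Hm.
  have -> : X = (s - s') / s *: choi Xi + s' / s *: choi Th.
    rewrite /X E; apply/matrixP => i j; rewrite !mxE; field.
    by rewrite s0 s'1.
  apply: psd_comb => //; first exact: choi_psd hTh.1.
    by rewrite divr_ge0 ?subr_ge0 // ltW.
  by rewrite divr_ge0 // ltW.
move=> HS; have psdX := (S_psd HXh).2 HS.
have [HX HP1 HP2 _] := spec_decomp HXh.
have Hd := (psd_diag HX HP1).1 psdX.
exists s, (thetaL X); split => //.
  split; first exact: thetaf_cp HX Hd.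
  apply: tr_thetaf => i j.
  have -> : blk X i j = (1 + s) / s *: Xi (delta_mx i j) - s^-1 *: Lam (delta_mx i j).
    by rewrite -!blk_choi; apply/matrixP => p q; rewrite !mxE.
  rewrite raddfB /= !mxtraceZ hXi.2 hLam.2 tr_delta; field.
  by rewrite s0.
have -> : choi (thetaL X) = X by exact: choi_thetaf.
rewrite /X; apply/matrixP => i j; rewrite !mxE; field.
by rewrite s0 s1.
Qed.
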